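(* Let $\mathcal A=\{G\in\mathcal G:\ \overline G\text{ is Abelian}\}$. The sets $\mathcal D=\{G\in\mathcal A:\ \overline G\text{ is divisible}\}$, $\mathcal T=\{G\in\mathcal A:\ \overline G\text{ is a torsion group}\}$ and $\mathcal F=\{G\in\mathcal A:\ \text{every finite Abelian group can be embedded into }\overline G\}$ are $G_\delta$ in $\mathcal A$.
   Context: Let $\mathbb N=\{1,2,3,\dots\}$. Equip $\mathbb N^{\mathbb N\times\mathbb N}$ with the product topology of the discrete topology on $\mathbb N$. Let $\mathcal G$ be the subspace consisting of those $A\in\mathbb N^{\mathbb N\times\mathbb N}$ that are the multiplication table of a group on the underlying set $\mathbb N$ whose identity element is $1$. For $G\in\mathcal G$, $\overline G$ denotes the group on $\mathbb N$ with multiplication table $G$. $\mathcal A$ carries the subspace topology. *)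

(* Defs.v *)
From HB Require Import structures.
From mathcomp Require Import all_boot all_order all_algebra all_fingroup.
From mathcomp Require Import all_classical topology borel_hierarchy.
Set Implicit Arguments. Unset Strict Implicit. Unset Printing Implicit Defensive.
Local Open Scope classical_set_scope.

(* The index set N = {1,2,3,...} is represented by Rocq's nat = {0,1,2,...}
   via the relabelling k <-> k+1; accordingly the identity element "1" of the
   paper is the number 0 here.  nat carries the discrete topology and the
   ambient space N^(N x N) is {ptws nat * nat -> nat}, the product topology. *)
Definition Space := {ptws (nat * nat) -> nat}.

Definition is_group_table (A : nat * nat -> nat) : Prop :=
  [/\ (forall a b c, A (A (a, b), c) = A (a, A (b, c))),
      (forall a, A (0%N, a) = a /\ A (a, 0%N) = a) &
      (forall a, exists b, A (a, b) = 0%N /\ A (b, a) = 0%N)].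

Definition calG : set Space := [set A | is_group_table A].

Definition gpow (A : nat * nat -> nat) (a n : nat) : nat :=
  iter n (fun x => A (x, a)) 0%N.

Definition is_abelian_table (A : nat * nat -> nat) : Prop :=
  forall a b, A (a, b) = A (b, a).

Definition calA : set Space := [set A | calG A /\ is_abelian_table A].

Definition is_divisible_table (A : nat * nat -> nat) : Prop :=
  forall (a n : nat), (0 < n)%N -> exists b, gpow A b n = a.

Definition is_torsion_table (A : nat * nat -> nat) : Prop :=
  forall a, exists2 n, (0 < n)%N & gpow A a n = 0%N.

Definition embeds_all_finite_abelian (A : nat * nat -> nat) : Prop :=
  forall gT : finGroupType, (forall x y : gT, (x * y)%g = (y * x)%g) ->
    exists f : gT -> nat, injective f /\
      (forall x y : gT, f (x * y)%g = A (f x, f y)).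

Definition calD : set Space := [set A | calA A /\ is_divisible_table A].
Definition calT : set Space := [set A | calA A /\ is_torsion_table A].
Definition calF : set Space := [set A | calA A /\ embeds_all_finite_abelian A].

(* Main.v *)
Require Import Defs.
From HB Require Import structures.
From mathcomp Require Import all_boot all_order all_algebra all_fingroup.
From mathcomp Require Import all_classical topology borel_hierarchy.
Local Open Scope classical_set_scope.

Lemma near_eval (A0 : Defs.Space) (t : nat * nat) : \forall A \near A0, A t = A0 t.
Proof.
have := (@pointwise_cvgP _ _ (nbhs A0) A0 _).1 (@cvg_id _ (nbhs A0)) t.
move=> /(_ _) /(_ [set A0 t]); apply.
by rewrite nbhs_principalE; apply/principal_filterP.
Qed.

Lemma nearS2 (A0 : Defs.Space) (P Q R : Defs.Space -> Prop) :
  (\forall A \near A0, P A) -> (\forall A \near A0, Q A) ->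
  (forall A, P A -> Q A -> R A) -> \forall A \near A0, R A.
Proof.
move=> hP hQ h; have F : Filter (nbhs A0) := nbhs_filter A0.
by apply: (filterS _ (filterI hP hQ)) => A [] /h; apply.
Qed.

Lemma nearT (A0 : Defs.Space) (R : Defs.Space -> Prop) :
  (forall A, R A) -> \forall A \near A0, R A.
Proof.
move=> h; have F : Filter (nbhs A0) := nbhs_filter A0.
by apply: (filterS _ filterT) => A _; apply: h.
Qed.

Lemma near_gpow (A0 : Defs.Space) b n : \forall A \near A0, gpow A b n = gpow A0 b n.
Proof.
elim: n => [|n IH]; first by apply: nearT.
apply: (@nearS2 A0 _ _ (fun A : Defs.Space => gpow A b n.+1 = gpow A0 b n.+1) IH (near_eval A0 (gpow A0 b n, b))) => A h1 h2.
by rewrite /gpow /= -/(gpow A b n) -/(gpow A0 b n) h1 h2.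
Qed.

Lemma open_loc (U : set Defs.Space) :
  (forall A0, U A0 -> \forall A \near A0, U A) -> open U.
Proof. move=> h; rewrite openE => A0 UA0; rewrite /interior /=; exact: (h A0 UA0). Qed.

Lemma open_sub (U : set Defs.Space) : open U ->
  open ((calA `&` U) : set (subspace calA)).
Proof.
move=> oU; apply/open_subspaceP; exists U => //.
apply/seteqP; split=> A /=; tauto.
Qed.

Lemma Gdelta_of (J : countType) (U : J -> set Defs.Space) (S : set Defs.Space) :
  (forall i, open (U i)) -> S = calA `&` (fun A => forall i, U i A) ->
  Gdelta (S : set (subspace calA)).
Proof.
move=> oU ->.
exists (fun k => calA `&` (if unpickle k is Some i then U i else setT)).
  move=> k; apply: open_sub; case: (unpickle k) => [i|] //; exact: openT.
apply/seteqP; split.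
  by move=> A [cA hA] k _; split=> //; case: (unpickle k).
move=> A h; split; first by case: (h 0%N I).
by move=> i; have [_] := h (pickle i) I; rewrite pickleK.
Qed.

Definition UD (p : nat * nat) : set Defs.Space :=
  [set A | (p.2 = 0)%N \/ exists b, gpow A b p.2 = p.1].

Lemma open_UD p : open (UD p).
Proof.
apply: open_loc => A0 [h|[b hb]]; first by apply: nearT => A; left.
apply: (@nearS2 A0 _ _ (UD p) (near_gpow A0 b p.2) (near_gpow A0 b p.2)).
by move=> A h _; right; exists b; rewrite h.
Qed.

Lemma GD : Gdelta (calD : set (subspace calA)).
Proof.
apply: (@Gdelta_of _ UD) => //; first exact: open_UD.
apply/seteqP; split.
  move=> A [cA dA]; split=> // [[a n]]; rewrite /UD /=.
  case: n => [|n]; [by left | right; exact: dA].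
move=> A [cA h]; split=> // a n n0; have := h (a, n); rewrite /UD /=.
by case=> // n0'; move: n0; rewrite n0'.
Qed.

Definition UT (a : nat) : set Defs.Space :=
  [set A | exists2 n, (0 < n)%N & gpow A a n = 0%N].

Lemma open_UT a : open (UT a).
Proof.
apply: open_loc => A0 [n n0 hn].
apply: (@nearS2 A0 _ _ (UT a) (near_gpow A0 a n) (near_gpow A0 a n)).
by move=> A h _; exists n; rewrite ?h.
Qed.

Lemma GT : Gdelta (calT : set (subspace calA)).
Proof.
apply: (@Gdelta_of _ UT) => //; first exact: open_UT.
Qed.

Definition JF := {n : nat & {set {perm 'I_n}}}.

Definition UF (p : JF) : set Defs.Space :=
  [set A | group_set (tagged p) -> abelian (tagged p) ->
    exists f : {perm 'I_(tag p)} -> nat, {in tagged p &, injective f} /\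
      {in tagged p &, forall x y, f (x * y)%g = A (f x, f y)}].

Lemma open_UF p : open (UF p).
Proof.
apply: open_loc => A0 hA0.
have [gH|ngH] := boolP (group_set (tagged p)); last by apply: nearT => A /(negP ngH).
have [aH|naH] := boolP (abelian (tagged p)); last by apply: nearT => A _ /(negP naH).
have [f [fi fh]] := hA0 gH aH.
have hn : \forall A \near A0, forall q : {perm 'I_(tag p)} * {perm 'I_(tag p)},
    A (f q.1, f q.2) = A0 (f q.1, f q.2).
  have F : Filter (nbhs A0) := nbhs_filter A0.
  exact: (@filter_forall Defs.Space _ (fun q (A : Defs.Space) => A (f q.1, f q.2) = A0 (f q.1, f q.2)) (nbhs A0) F (fun q => near_eval A0 _)).
apply: (@nearS2 A0 _ _ (UF p) hn hn) => A h _ _ _; exists f; split=> // x y hx hy.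
by rewrite fh // (h (x, y)).
Qed.

Section Cayley.
Variable gT : finGroupType.
Hypothesis ab : forall x y : gT, (x * y)%g = (y * x)%g.

Definition cay_fun (g : gT) (i : 'I_#|gT|) : 'I_#|gT| := enum_rank (g * enum_val i)%g.
Lemma cay_inj g : injective (cay_fun g).
Proof.
by move=> i j /enum_rank_inj /mulgI /(congr1 enum_rank); rewrite !enum_valK.
Qed.
Definition cay g : {perm 'I_#|gT|} := perm (cay_inj g).

Lemma cayM g h : cay (g * h)%g = (cay g * cay h)%g.
Proof.
apply/permP => i; rewrite permM !permE /cay_fun enum_rankK.
by rewrite mulgA (ab g h).
Qed.

Lemma cay_injective : injective cay.
Proof.
move=> g h /permP /(_ (enum_rank 1%g)); rewrite !permE /cay_fun enum_rankK.
by rewrite !mulg1 => /enum_rank_inj.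
Qed.

Definition cayH : {set {perm 'I_#|gT|}} := [set cay g | g in [set: gT]].

Lemma cay1 : cay 1%g = 1%g.
Proof. by apply/permP => i; rewrite permE perm1 /cay_fun mul1g enum_valK. Qed.

Lemma cayH_group : group_set cayH.
Proof.
apply/group_setP; split; first by apply/imsetP; exists 1%g; rewrite ?inE ?cay1.
move=> x y /imsetP [g _ ->] /imsetP [h _ ->]; apply/imsetP; exists (g * h)%g.
  by rewrite inE.
by rewrite cayM.
Qed.

Lemma cayH_abelian : abelian cayH.
Proof.
apply/centsP => x /imsetP [g _ ->] y /imsetP [h _ ->].
by rewrite /commute -!cayM ab.
Qed.
End Cayley.

Lemma GF : Gdelta (calF : set (subspace calA)).
Proof.
apply: (@Gdelta_of _ UF) => //; first exact: open_UF.
apply/seteqP; split.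
  move=> A [cA eA]; split=> // -[n H] /= gH aH.
  pose G := Group gH.
  have abG : forall x y : subg_of G, (x * y)%g = (y * x)%g.
    move=> x y; apply: subg_inj.
    exact: (centsP aH) _ (subgP x) _ (subgP y).
  have [f [fi fh]] := eA (subg_of G) abG.
  exists (fun x => f (subg G x)); split.
    move=> x y hx hy /fi /(congr1 sgval).
    by rewrite !subgK.
  by move=> x y hx hy; rewrite -fh subgM.
move=> A [cA h]; split=> // gT ab.
have [f [fi fh]] := h (Tagged (fun n => {set {perm 'I_n}}) (cayH gT)) (@cayH_group gT ab) (@cayH_abelian gT ab).
have mem g : @cay gT g \in cayH gT by apply/imsetP; exists g; rewrite ?inE.
exists (fun g => f (@cay gT g)); split.
  by move=> g h' /fi; rewrite !mem => /(_ isT isT) /cay_injective.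
by move=> g h'; rewrite (@cayM gT ab) fh; [| exact: mem | exact: mem].
Qed.

Theorem proposition8p5 :
  [/\ Gdelta (calD : set (subspace calA)),
      Gdelta (calT : set (subspace calA)) &
      Gdelta (calF : set (subspace calA))].
Proof. by split; [exact: GD | exact: GT | exact: GF]. Qed.
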